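(* Let $q,r$ be coprime integers with $0<q\le r$, and let $K,N$ be integers with $1\le N\le K$ and $N\equiv 1\pmod r$. Call a partition $\lambda=(1^{k_1}2^{k_2}\cdots N^{k_N})\vdash N$ a permissible configuration if (C1) $\ell(\lambda)\le K$; (C2) $\ell(\lambda^* )\le r-q+1$ (no part exceeds $r-q+1$); and (C3) $\sum_{i\ge 2}k_i\le \frac{N-1}{r}\le\frac{K-1}{q}$. Then the number of permissible configurations is \[ \binom{(N-1)/r+r-q}{r-q}. \]
   Context: A partition $\lambda\vdash N$ is a non-increasing sequence of positive integers summing to $N$, written $\lambda=(1^{k_1}2^{k_2}\cdots N^{k_N})$ with $k_i$ the number of parts equal to $i$; $\ell(\lambda)=\sum_i k_i$ is its length, and $\lambda^*$ denotes the conjugate partition (transpose Ferrers diagram), so $\ell(\lambda^* )$ is the largest part of $\lambda$. *)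

(* Defs.v *)
From mathcomp Require Import all_boot.
Set Implicit Arguments. Unset Strict Implicit. Unset Printing Implicit Defensive.

Definition is_partition (N : nat) (l : seq nat) : bool :=
  [&& sorted geq l, all (fun x => 0 < x) l & sumn l == N].

Definition mult (l : seq nat) (i : nat) : nat := count_mem i l.

Definition plen (l : seq nat) : nat := size l.

(* ell(conjugate of lambda) = largest part of lambda (length of the conjugate partition) *)
Definition conj_len (l : seq nat) : nat := \max_(x <- l) x.

Definition big_parts (N : nat) (l : seq nat) : nat := \sum_(2 <= i < N.+1) mult l i.

(* Permissible configuration (C1)-(C3).  The second inequality of (C3),
   (N-1)/r <= (K-1)/q, is expressed over nat as ((N-1)/r) * q <= K-1,
   which is equivalent since q > 0 and r | N-1. *)
Definition permissible (q r K N : nat) (l : seq nat) : bool :=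
  [&& is_partition N l,
      plen l <= K,
      conj_len l <= r - q + 1,
      big_parts N l <= (N - 1) %/ r
    & ((N - 1) %/ r) * q <= K - 1].

(* Main.v *)
Require Import Defs.
From mathcomp Require Import all_boot zify.

Lemma geq_trans : transitive geq.
Proof. by move=> a b c /= h1 h2; apply: leq_trans h2 h1. Qed.

Lemma geq_anti : antisymmetric geq.
Proof. by move=> x y /andP[/= h1 h2]; apply/eqP; rewrite eqn_leq h1 h2. Qed.

Fixpoint gen (m M : nat) : seq (seq nat) :=
  match m with
  | 0 => [:: [::]]
  | m'.+1 => let fix g M := match M with
                            | 0 => [:: [::]]
                            | M'.+1 => gen m' M'.+1 ++ map (cons m'.+2) (g M')
                            end in g M
  end.

Lemma gen_eq m M : gen m.+1 M.+1 = gen m M.+1 ++ map (cons m.+2) (gen m.+1 M).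
Proof. by []. Qed.

Definition good m M (t : seq nat) :=
  [&& sorted geq t, all (fun x => 2 <= x <= m.+1) t & size t <= M].

Lemma mem_map_cons (a x : nat) t S :
  (x :: t \in map (cons a) S) = (x == a) && (t \in S).
Proof.
apply/mapP/andP => [[u hu [-> ->]]|[/eqP -> h]]; first by [].
by exists t.
Qed.

Lemma mem_gen m M t : (t \in gen m M) = good m M t.
Proof.
elim: m M t => [|m IHm] M t.
  case: t => [|x t]; rewrite /good /= inE //=.
  by apply/esym/negbTE; apply/negP => /and3P[_ /andP[/andP[h1 h2] _] _]; lia.
elim: M t => [|M IHM] t.
  by case: t => [|x t]; rewrite /good /= inE /= ?andbF.
rewrite gen_eq mem_cat IHm.
case: t => [|x t]; first by rewrite /good /=.
rewrite mem_map_cons IHM /good /= !(path_sortedE geq_trans).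
have [->|hx] := eqVneq x m.+2.
  have -> : (m.+2 <= m.+1) = false by rewrite ltnn.
  rewrite /= !andbF /=.
  apply/idP/idP.
    move=> /and3P[h1 h2 h3]; apply/and3P; split; [|by rewrite ltnSn h2|by []].
    by rewrite h1 andbT; apply: sub_all h2 => y /andP[].
  by move=> /and3P[/andP[_ h1] /andP[_ h2] h3]; apply/and3P; split.
rewrite orbF; apply/idP/idP.
  move=> /and3P[/andP[h1 h2] /andP[/andP[h3 h4] h5] h6].
  rewrite h1 h2 h3 h6 /= (leq_trans h4) //= andbT.
  by apply: sub_all h5 => y /andP[-> h]; rewrite (leq_trans h).
move=> /and3P[/andP[h1 h2] /andP[/andP[h3 h4] h5] h6].
have hx' : x <= m.+1 by move: hx h4; clear; lia.
rewrite h2 h3 hx' h6 h1 /= andbT.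
have := (conj h1 h5) => /andP; rewrite -all_predI.
by apply: sub_all => y /andP[/= hy /andP[-> _]]; rewrite (leq_trans hy).
Qed.

Lemma uniq_gen m M : uniq (gen m M).
Proof.
elim: m M => [|m IHm] M //.
elim: M => [|M IHM] //.
rewrite gen_eq cat_uniq IHm map_inj_uniq //=; last by move=> a b [].
rewrite IHM andbT.
apply/hasPn => u /mapP[t _ ->]; rewrite mem_gen /good /=.
by rewrite ltnn /= andbF.
Qed.

Lemma size_gen m M : size (gen m M) = 'C(M + m, m).
Proof.
elim: m M => [|m IHm] M; first by rewrite bin0.
elim: M => [|M IHM]; first by rewrite binn.
by rewrite gen_eq size_cat size_map IHm IHM !addnS !addSn [RHS]binS addnC.
Qed.

Lemma sum_count_range a b (l : seq nat) :
  \sum_(a <= i < b) mult l i = count (fun x => a <= x < b) l.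
Proof.
elim: l => [|x l IH]; first by rewrite big1.
rewrite /mult /= big_split /= -/(mult l) IH; congr (_ + _).
rewrite (eq_bigr (fun i => if i == x then 1 else 0)); last first.
  by move=> i _; rewrite eq_sym; case: (i == x).
rewrite -big_mkcond sum1_count.
have -> : count (fun i => i == x) (index_iota a b) = count_mem x (index_iota a b) by [].
by rewrite count_uniq_mem ?iota_uniq // mem_index_iota.
Qed.

Lemma sumn_le t b : all (fun x => x <= b) t -> sumn t <= size t * b.
Proof. elim: t => //= x t IH /andP[h1 h2]; rewrite mulSn leq_add //; exact: IH. Qed.

Lemma size_le_sumn t : all (fun x => 0 < x) t -> size t <= sumn t.
Proof. elim: t => //= x t IH /andP[h1 h2]; rewrite -add1n leq_add //; exact: IH. Qed.

Lemma mem_le_sumn x t : x \in t -> x <= sumn t.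
Proof.
elim: t => //= y t IH; rewrite inE => /orP[/eqP ->|h]; first exact: leq_addr.
by rewrite (leq_trans (IH h)) // leq_addl.
Qed.

Lemma sumn_filterC (a : pred nat) l :
  sumn l = sumn (filter a l) + sumn (filter (predC a) l).
Proof. by elim: l => //= x l ->; case: (a x) => /=; lia. Qed.

Lemma pairwise_nseq k : pairwise geq (nseq k 1).
Proof. by elim: k => //= k ->; rewrite all_nseq /= orbT. Qed.

Definition fill N (t : seq nat) := t ++ nseq (N - sumn t) 1.

Lemma sorted_fill N t : sorted geq t -> all (fun x => 0 < x) t -> sorted geq (fill N t).
Proof.
move=> hs hp; rewrite (sorted_pairwise geq_trans) pairwise_cat pairwise_nseq andbT.
rewrite -(sorted_pairwise geq_trans) hs andbT.
apply/allrelP => x y hx; rewrite mem_nseq => /andP[_ /eqP ->].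
exact: (allP hp).
Qed.

Lemma filter_fill N t : all (fun x => 2 <= x) t -> filter (fun x => 2 <= x) (fill N t) = t.
Proof. by move=> h; rewrite filter_cat filter_nseq /= (all_filterP h) cats0. Qed.

Theorem proposition3 (q r K N : nat) :
  coprime q r -> 0 < q -> q <= r ->
  1 <= N -> N <= K -> N = 1 %[mod r] ->
  ((N - 1) %/ r) * q <= K - 1 ->
  exists s : seq (seq nat),
    [/\ uniq s,
        (forall l, (l \in s) = permissible q r K N l)
      & size s = 'C((N - 1) %/ r + (r - q), r - q)].
Proof.
move=> hco hq hqr hN hNK hmod hM.
set m := r - q; set M := (N - 1) %/ r.
have hMr : M * m.+1 <= N - 1.
  apply: (@leq_trans (M * r)); first by rewrite leq_mul2l /m; apply/orP; right; lia.
  exact: leq_divM.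
exists (map (fill N) (gen m M)); split.
- rewrite map_inj_in_uniq ?uniq_gen // => t u ht hu e.
  move: ht hu; rewrite !mem_gen => /and3P[_ ht _] /and3P[_ hu _].
  have ht2 : all (fun x => 2 <= x) t by apply: sub_all ht => x /andP[].
  have hu2 : all (fun x => 2 <= x) u by apply: sub_all hu => x /andP[].
  by rewrite -(@filter_fill N t ht2) e filter_fill.
- move=> l; apply/mapP/idP.
  + case=> t; rewrite mem_gen => /and3P[hs hr hsz] ->.
    have hp : all (fun x => 0 < x) t by apply: sub_all hr => x /andP[]; lia.
    have hsum : sumn t <= N - 1.
      apply: leq_trans (@sumn_le t m.+1 _) _.
        by apply: sub_all hr => x /andP[].
      by apply: leq_trans hMr; rewrite leq_mul2r hsz orbT.
    rewrite /permissible /is_partition (@sorted_fill N t) //=.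
    apply/and5P; split.
    * rewrite all_cat hp all_nseq orbT /= sumn_cat sumn_nseq.
      apply/eqP; lia.
    * rewrite /plen size_cat size_nseq; have := @size_le_sumn t hp; lia.
    * apply/bigmax_leqP_seq => x; rewrite mem_cat mem_nseq => /orP[hx|/andP[_ /eqP->]] _.
        by have /andP[_ h] := allP hr x hx; lia.
      lia.
    * rewrite /big_parts sum_count_range count_cat count_nseq /= mul0n addn0.
      exact: leq_trans (count_size _ _) hsz.
    * exact: hM.
  + move=> /and5P[/and3P[hs hp /eqP hsum] hK hc hb _].
    have hlN : forall x, x \in l -> x <= N by move=> x hx; rewrite -hsum mem_le_sumn.
    exists (filter (fun x => 2 <= x) l).
    * rewrite mem_gen /good (sorted_filter geq_trans) //=.
      apply/andP; split.
        rewrite all_filter; apply/allP => x hx /=; apply/implyP => h2; rewrite h2 /=.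
        have := @leq_bigmax_seq _ l predT (fun x => x) x hx isT.
        move=> h3; apply: leq_trans h3 _; rewrite /m -addn1; exact: hc.
      rewrite size_filter; apply: leq_trans hb.
      rewrite /big_parts sum_count_range; apply: eq_leq; apply: eq_in_count => x hx /=.
      by rewrite ltnS hlN // andbT.
    * set t := filter _ l.
      apply: (sorted_eq geq_trans geq_anti) => //.
        apply: sorted_fill; first exact: (sorted_filter geq_trans).
        by rewrite all_filter; apply: sub_all hp => x /= ->; rewrite implybT.
      have hall : all (pred1 1) (filter (predC (fun x => 2 <= x)) l).
        rewrite all_filter; apply/allP => x hx /=; have := allP hp x hx; lia.
      have E : filter (predC (fun x => 2 <= x)) l = nseq (N - sumn t) 1.
        rewrite (all_pred1P _ _ hall); congr nseq.
        have := sumn_filterC (fun x => 2 <= x) l.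
        move: (all_pred1P _ _ hall); rewrite hsum -/t; set u := filter (predC _) l => Eu H.
        have : sumn u = size u by rewrite {1}Eu sumn_nseq mul1n.
        lia.
      by rewrite /fill -E perm_sym perm_filterC.
- by rewrite size_map size_gen.
Qed.
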